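(* Consider a slotted system with diversity. There are $N$ users, $N_{sub}\ge2$ sub-carriers and slots $1,\dots,T$, where $0<\alpha<1$, $\alpha T\in\mathbb Z$ and $(1-\alpha)T$ is even. The BS uses pmfs $\mathbf p$ on users and $\mathbf q$ on sub-carriers: in every slot, independently, it chooses user $i$ with probability $p_i$ and sub-carrier $j$ with probability $q_j$, and sends an update to the chosen user on the chosen sub-carrier. The adversary uses the strategy $\sigma'$: in each slot $t\in\{\frac{(1-\alpha)T}2+1,\dots,\frac{(1+\alpha)T}2\}$ it blocks one sub-carrier chosen uniformly at random, independently of everything else, and it blocks nothing in other slots. Ages satisfy $a_i(1)=1$, $a_i(t+1)=1$ if user $i$ is chosen in slot $t$ on an unblocked sub-carrier, and $a_i(t+1)=a_i(t)+1$ otherwise. Let $\Delta^{\mathbf p,\mathbf q,\sigma'}=\frac1T\sum_{t=1}^T\frac1N\sum_i\mathbb E[a_i(t)]$. Then the pair (uniform $\mathbf p$, uniform $\mathbf q$) minimizes $\Delta^{\mathbf p,\mathbf q,\sigma'}$ over all pmfs $\mathbf p$ on the users and $\mathbf q$ on the sub-carriers.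
   Context: The expectation is over both the BS's and the adversary's randomness. *)

(* Defs.v *)
From HB Require Import structures.
From mathcomp Require Import all_boot all_order all_algebra.
Set Implicit Arguments. Unset Strict Implicit. Unset Printing Implicit Defensive.
Import Order.TTheory GRing.Theory Num.Theory.
Local Open Scope ring_scope.

Section Model.
Variables (R : realFieldType) (N Nsub T : nat) (alpha : R).

Definition is_pmf (n : nat) (p : 'I_n -> R) : Prop :=
  (forall i, 0 <= p i) /\ \sum_(i < n) p i = 1.

Definition uniform_pmf (n : nat) : 'I_n -> R := fun _ => 1 / n%:R.

(* slot s (1-indexed) is attacked iff (1-alpha)T/2 < s <= (1+alpha)T/2 *)
Definition attacked (s : nat) : bool :=
  ((1 - alpha) * T%:R / 2 < s%:R) && (s%:R <= (1 + alpha) * T%:R / 2).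

(* outcome of one slot: (chosen user, chosen sub-carrier, blocked sub-carrier or None) *)
Definition slot_outcome := ('I_N * 'I_Nsub * option 'I_Nsub)%type.
(* outcome of the whole horizon; slot index t : 'I_T is slot number t+1 *)
Definition outcome := {ffun 'I_T -> slot_outcome}.

Definition adv_prob (t : 'I_T) (b : option 'I_Nsub) : R :=
  if attacked t.+1 then (if b is Some _ then 1 / Nsub%:R else 0)
  else (if b is None then 1 else 0).

Definition weight (p : 'I_N -> R) (q : 'I_Nsub -> R) (w : outcome) : R :=
  \prod_(t < T) (p (w t).1.1 * q (w t).1.2 * adv_prob t (w t).2).

(* user i receives a successful update in slot with 0-based index n *)
Definition success (w : outcome) (i : 'I_N) (n : nat) : bool :=
  match insub n : option 'I_T with
  | Some t => ((w t).1.1 == i) && ((w t).2 != Some (w t).1.2)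
  | None => false
  end.

(* age_at w i n = a_i(n+1) *)
Fixpoint age_at (w : outcome) (i : 'I_N) (n : nat) : nat :=
  match n with
  | 0 => 1
  | n'.+1 => if success w i n' then 1 else (age_at w i n').+1
  end.

Definition expect (p : 'I_N -> R) (q : 'I_Nsub -> R) (X : outcome -> R) : R :=
  \sum_(w : outcome) weight p q w * X w.

Definition avg_age (p : 'I_N -> R) (q : 'I_Nsub -> R) : R :=
  1 / T%:R * \sum_(t < T) (1 / N%:R * \sum_(i < N)
     expect p q (fun w => (age_at w i t)%:R)).

End Model.

(* Main.v *)
Set Warnings "-notation-overridden,-ambiguous-paths,-notation-incompatible-prefix".
Require Import Defs.
From HB Require Import structures.
From mathcomp Require Import all_boot all_order all_algebra.
From mathcomp Require Import ring lra.
Import Order.TTheory GRing.Theory Num.Theory.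
Local Open Scope ring_scope.
Lemma sum_option (R : realFieldType) (I : finType) (F : option I -> R) :
  \sum_b F b = F None + \sum_i F (Some i).
Proof.
rewrite (bigD1 None) //=; congr (_ + _).
rewrite (reindex_omap Some (fun b => b)) //=.
  by apply: eq_bigl => i; rewrite eqxx.
by case.
Qed.

Section Expect.
Variables (R : realFieldType) (N Nsub T : nat) (alpha : R).
Variables (p : 'I_N -> R) (q : 'I_Nsub -> R).

Definition Fo (t : 'I_T) (o : slot_outcome N Nsub) : R :=
  p o.1.1 * q o.1.2 * adv_prob alpha t o.2.
Definition flo (i : 'I_N) (o : slot_outcome N Nsub) : R :=
  if (o.1.1 == i) && (o.2 != Some o.1.2) then 0 else 1.
Definition fl (w : outcome N Nsub T) i s : R := if success w i s then 0 else 1.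
Definition cfac (t : 'I_T) : R :=
  1 - (if attacked T alpha t.+1 then 1 / Nsub%:R else 0).

Lemma ageE w i n : (age_at w i n)%:R =
  1 + \sum_(0 <= j < n) \prod_(0 <= s < n) (if (j <= s)%N then fl w i s else 1) :> R.
Proof.
elim: n => [|n IH]; first by rewrite big_geq // addr0.
rewrite /= big_nat_recr //=.
rewrite (eq_big_nat _ _ (F2 := fun j => (\prod_(0 <= s < n)
   (if (j <= s)%N then fl w i s else 1)) * fl w i n)); last first.
  by move=> j /andP[_ hj]; rewrite big_nat_recr //= (ltnW hj).
rewrite -mulr_suml big_nat_recr //=.
have -> : \prod_(0 <= s < n) (if (n <= s)%N then fl w i s else 1) = 1.
  by rewrite big_nat big1 // => s /andP[_ hs]; rewrite leqNgt hs.
rewrite leqnn mul1r /fl.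
case: (success w i n); first by rewrite mulr0 !addr0.
by rewrite -natr1 IH mulr1 addrA.
Qed.

Lemma prod_ord w i j n : (n <= T)%N ->
  \prod_(0 <= s < n) (if (j <= s)%N then fl w i s else 1) =
  \prod_(t < T) (if (j <= t)%N && (t < n)%N then flo i (w t) else 1).
Proof.
move=> nT.
rewrite (big_nat_widen _ _ _ _ _ nT) big_mkcond big_mkord.
apply: eq_bigr => t _ /=.
have -> : fl w i t = flo i (w t).
  by rewrite /fl /flo /success valK.
by case: (j <= t)%N; case: (t < n)%N.
Qed.


Lemma expect_prod (h : 'I_T -> slot_outcome N Nsub -> R) :
  expect alpha p q (fun w => \prod_(t < T) h t (w t)) =
  \prod_(t < T) \sum_o Fo t o * h t o.
Proof.
rewrite /expect /weight.
transitivity (\sum_(w : outcome N Nsub T) \prod_(t < T) (Fo t (w t) * h t (w t))).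
  by apply: eq_bigr => w _; rewrite -big_split.
by rewrite bigA_distr_bigA.
Qed.

Lemma sum_triple (G : 'I_N -> 'I_Nsub -> option 'I_Nsub -> R) :
  \sum_(o : slot_outcome N Nsub) G o.1.1 o.1.2 o.2 =
  \sum_u \sum_j \sum_b G u j b.
Proof.
rewrite -(pair_bigA _ (fun a b => G a.1 a.2 b)) /=.
by rewrite -(pair_bigA _ (fun u j => \sum_b G u j b)).
Qed.

Hypothesis Nsub_gt0 : (0 < Nsub)%N.

Lemma adv_sum (t : 'I_T) : \sum_(b : option 'I_Nsub) adv_prob alpha t b = 1.
Proof.
rewrite sum_option /adv_prob; case: (attacked T alpha t.+1).
  rewrite add0r sumr_const card_ord -(mulr_natr (1 / Nsub%:R)) div1r mulVf //.
  by rewrite pnatr_eq0 -lt0n.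
by rewrite big1 ?addr0.
Qed.

Definition aat (t : 'I_T) : R := if attacked T alpha t.+1 then 1 / Nsub%:R else 0.

Lemma adv_some (t : 'I_T) (j : 'I_Nsub) : adv_prob alpha t (Some j) = aat t.
Proof. by []. Qed.

Hypothesis psum : \sum_i p i = 1.
Hypothesis qsum : \sum_j q j = 1.

Lemma sumF t : \sum_o Fo t o = 1.
Proof.
rewrite /Fo (sum_triple (fun u j b => p u * q j * adv_prob alpha t b)).
under eq_bigr => u _ do under eq_bigr => j _ do rewrite -mulr_sumr adv_sum mulr1.
under eq_bigr => u _ do rewrite -mulr_sumr qsum mulr1.
exact: psum.
Qed.

Lemma sumFflo t i : \sum_o Fo t o * flo i o = 1 - p i * cfac t.
Proof.
have e : forall o, Fo t o * flo i o = Fo t o -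
   Fo t o * (if (o.1.1 == i) && (o.2 != Some o.1.2) then 1 else 0).
  by move=> o; rewrite /flo; case: ifP => _; rewrite ?mulr0 ?mulr1 ?subr0 ?subrr.
rewrite (eq_bigr _ (fun o _ => e o)) sumrB sumF; congr (1 - _).
rewrite /Fo (sum_triple (fun u j b => p u * q j * adv_prob alpha t b *
   (if (u == i) && (b != Some j) then 1 else 0))).
rewrite (bigD1 i) //= [X in _ + X]big1 ?addr0; last first.
  move=> u hu; apply: big1 => j _; apply: big1 => b _.
  by rewrite (negbTE hu) mulr0.
have inner : forall j, \sum_b p i * q j * adv_prob alpha t b *
   (if (i == i) && (b != Some j) then 1 else 0) = p i * q j * cfac t.
  move=> j; under eq_bigr => b _ do rewrite -mulrA; rewrite -mulr_sumr; congr (_ * _).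
  have eb : forall b, adv_prob alpha t b * (if (i == i) && (b != Some j) then 1 else 0)
      = if b != Some j then adv_prob alpha t b else 0.
    by move=> b; rewrite eqxx /=; case: ifP; rewrite ?mulr1 ?mulr0.
  rewrite (eq_bigr _ (fun b _ => eb b)) -big_mkcond /=.
  have := adv_sum t; rewrite (bigD1 (Some j)) //= adv_some => h.
  by rewrite /cfac -/(aat t) -h addrC addrK.
under eq_bigr => j _ do rewrite inner.
by rewrite -mulr_suml -mulr_sumr qsum mulr1.
Qed.

Lemma expect_age i n : (n <= T)%N ->
  expect alpha p q (fun w : outcome N Nsub T => (age_at w i n)%:R) =
  1 + \sum_(0 <= j < n) \prod_(t < T)
      (if (j <= t)%N && (t < n)%N then 1 - p i * cfac t else 1).
Proof.
move=> nT.
have e1 : expect alpha p q (fun w : outcome N Nsub T => (age_at w i n)%:R) =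
   expect alpha p q (fun w : outcome N Nsub T => 1 + \sum_(0 <= j < n) \prod_(t < T)
      (if (j <= t)%N && (t < n)%N then flo i (w t) else 1)).
  rewrite /expect; apply: eq_bigr => w _; rewrite ageE; congr (_ * (1 + _)).
  by apply: eq_bigr => j _; exact: prod_ord.
rewrite e1 /expect.
under eq_bigr => w _ do rewrite mulrDr mulr1 mulr_sumr.
rewrite big_split /= exchange_big /=.
congr (_ + _).
  have := expect_prod (fun _ _ => 1); rewrite /expect.
  rewrite big1_eq => H.
  rewrite (eq_bigr (fun w => weight alpha p q w * 1)); last by move=> w _; rewrite mulr1.
  rewrite H big1 // => t _.
  under eq_bigr => o _ do rewrite mulr1.
  exact: sumF.
apply: eq_bigr => j _.
have := expect_prod (fun t o => if (j <= t)%N && (t < n)%N then flo i o else 1).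
rewrite /expect => ->.
apply: eq_bigr => t _; case: ifP => _; first exact: sumFflo.
under eq_bigr => o _ do rewrite mulr1.
exact: sumF.
Qed.
End Expect.
Section Jensen.
Variables (R : realFieldType) (N : nat) (p : 'I_N -> R).
Hypothesis N_gt0 : (0 < N)%N.
Hypothesis p_ge0 : forall i, 0 <= p i.
Hypothesis psum : \sum_i p i = 1.

Definition mm : R := 1 / N%:R.

Definition Good (h : R -> R) :=
 [/\ forall x, 0 <= x -> x <= 1 -> 0 <= h x,
     forall x y, 0 <= x -> x <= y -> y <= 1 -> h y <= h x &
     h mm <= mm * \sum_i h (p i)].

Lemma p_le1 i : p i <= 1.
Proof. by rewrite -psum (bigD1 i) //= lerDl sumr_ge0. Qed.

Lemma N_neq0 : N%:R != 0 :> R.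
Proof. by rewrite pnatr_eq0 -lt0n. Qed.

Lemma mN : mm * N%:R = 1.
Proof. by rewrite /mm div1r mulVf // N_neq0. Qed.

Lemma mm_ge0 : 0 <= mm.
Proof. by rewrite /mm divr_ge0 ?ler0n. Qed.

Lemma mm_le1 : mm <= 1.
Proof.
rewrite /mm div1r invf_le1 ?ltr0n // ler1n //.
Qed.

Lemma Good_ext h g : (forall x, h x = g x) -> Good h -> Good g.
Proof.
move=> e [h1 h2 h3]; split.
- by move=> x ? ?; rewrite -e h1.
- by move=> x y ? ? ?; rewrite -!e h2.
- by rewrite -e (eq_bigr (fun i => h (p i))) // => i _; rewrite e.
Qed.

Lemma Good_const c : 0 <= c -> Good (fun _ => c).
Proof.
move=> c0; split => //.
by rewrite sumr_const card_ord -mulr_natr mulrCA mN mulr1.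
Qed.

Lemma Good_lin c : 0 <= c -> c <= 1 -> Good (fun x => 1 - x * c).
Proof.
move=> c0 c1; split.
- by move=> x x0 x1; rewrite subr_ge0 mulr_ile1.
- by move=> x y x0 xy y1; rewrite lerB // ler_wpM2r.
- rewrite sumrB sumr_const card_ord -mulr_suml psum mul1r mulrBr.
  by rewrite -mulr_natr mul1r mN.
Qed.

Lemma Good_add h g : Good h -> Good g -> Good (fun x => h x + g x).
Proof.
move=> [h1 h2 h3] [g1 g2 g3]; split.
- by move=> x ? ?; rewrite addr_ge0 ?h1 ?g1.
- by move=> x y ? ? ?; rewrite lerD ?h2 ?g2.
- by rewrite big_split /= mulrDr lerD.
Qed.

Lemma Good_mul h g : Good h -> Good g -> Good (fun x => h x * g x).
Proof.
move=> [h1 h2 h3] [g1 g2 g3]; split.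
- by move=> x ? ?; rewrite mulr_ge0 ?h1 ?g1.
- move=> x y x0 xy y1; have y0 : 0 <= y := le_trans x0 xy.
  by rewrite ler_pM ?h1 ?g1 ?h2 ?g2 // (le_trans xy y1).
- set a := fun i => h (p i); set b := fun i => g (p i).
  have cheb : forall i j, 0 <= (a i - a j) * (b i - b j).
    move=> i j; rewrite /a /b.
    have [pij|pji] := leP (p i) (p j).
      by rewrite mulr_ge0 // subr_ge0 ?h2 ?g2 ?p_le1.
    by rewrite mulr_le0 // subr_le0 ?h2 ?g2 ?p_le1 ?(ltW pji).
  have H1 : (\sum_i a i) * (\sum_i b i) <= N%:R * \sum_i a i * b i.
    have : 0 <= \sum_i \sum_j (a i - a j) * (b i - b j).
      by apply: sumr_ge0 => i _; apply: sumr_ge0 => j _; exact: cheb.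
    have ex : forall i j, (a i - a j) * (b i - b j) =
       a i * b i + a j * b j - (a i * b j + a j * b i) by move=> i j; ring.
    under eq_bigr => i _ do under eq_bigr => j _ do rewrite ex.
    under eq_bigr => i _ do rewrite sumrB !big_split /= sumr_const card_ord.
    rewrite sumrB !big_split /= sumr_const card_ord.
    have P1 : \sum_i \sum_j a i * b j = (\sum_i a i) * (\sum_i b i).
      by rewrite mulr_suml; apply: eq_bigr => i _; rewrite mulr_sumr.
    have P2 : \sum_i \sum_j a j * b i = (\sum_i a i) * (\sum_i b i).
      by rewrite exchange_big /=; exact: P1.
    rewrite P1 P2 -sumrMnl; set Sab := \sum_i a i * b i.
    rewrite mulr_natl /Sab subr_ge0 -!mulr2n lerMn2r /=.
    by rewrite -sumrMnl.
  apply: (@le_trans _ _ ((mm * \sum_i a i) * (mm * \sum_i b i))).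
    by rewrite ler_pM ?h1 ?g1 ?mm_ge0 ?mm_le1.
  rewrite (_ : mm * \sum_i h (p i) * g (p i) = mm * mm * (N%:R * \sum_i a i * b i)); last first.
    by rewrite [RHS]mulrA -[mm * mm * _]mulrA mN mulr1.
  rewrite (_ : mm * _ * (mm * _) = mm * mm * ((\sum_i a i) * \sum_i b i)); last by ring.
  by rewrite ler_wpM2l // mulr_ge0 // mm_ge0.
Qed.

Lemma Good_prod (I : Type) (r : seq I) (F : I -> R -> R) :
  (forall i, Good (F i)) -> Good (fun x => \prod_(i <- r) F i x).
Proof.
move=> HF; elim: r => [|a r IH].
  apply: (@Good_ext (fun _ => 1)); first by move=> x; rewrite big_nil.
  exact: Good_const ler01.
apply: (@Good_ext (fun x => F a x * \prod_(i <- r) F i x)).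
  by move=> x; rewrite big_cons.
exact: Good_mul (HF a) IH.
Qed.

Lemma Good_sum (I : Type) (r : seq I) (F : I -> R -> R) :
  (forall i, Good (F i)) -> Good (fun x => \sum_(i <- r) F i x).
Proof.
move=> HF; elim: r => [|a r IH].
  apply: (@Good_ext (fun _ => 0)); first by move=> x; rewrite big_nil.
  exact: Good_const (lexx 0).
apply: (@Good_ext (fun x => F a x + \sum_(i <- r) F i x)).
  by move=> x; rewrite big_cons.
exact: Good_add (HF a) IH.
Qed.
End Jensen.

Theorem theorem12 (R : realFieldType) (N Nsub T : nat) (alpha : R) :
  (0 < N)%N -> (2 <= Nsub)%N -> (0 < T)%N ->
  0 < alpha -> alpha < 1 ->
  (exists k : nat, alpha * T%:R = k%:R) ->
  (exists m : nat, (1 - alpha) * T%:R = (2 * m)%:R) ->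
  forall (p : 'I_N -> R) (q : 'I_Nsub -> R),
    is_pmf p -> is_pmf q ->
    @avg_age R N Nsub T alpha (@uniform_pmf R N) (@uniform_pmf R Nsub)
      <= @avg_age R N Nsub T alpha p q.
Proof.
move=> N0 N2 T0 _ _ _ _ p q [p0 ps] [q0 qs].
have Ns0 : (0 < Nsub)%N by apply: leq_trans N2.
have usum : forall n, (0 < n)%N -> \sum_(i < n) @uniform_pmf R n i = 1.
  move=> n n0; rewrite /uniform_pmf sumr_const card_ord -(mulr_natr (1 / n%:R)).
  by rewrite div1r mulVf // pnatr_eq0 -lt0n.
have cf0 : forall t : 'I_T, 0 <= @cfac R Nsub T alpha t /\ @cfac R Nsub T alpha t <= 1.
  move=> t; rewrite /cfac; case: (attacked T alpha t.+1); last by rewrite subr0 ler01 lexx.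
  have h0 : 0 <= 1 / Nsub%:R :> R by rewrite divr_ge0 ?ler0n.
  have h1 : 1 / Nsub%:R <= 1 :> R by rewrite div1r invf_le1 ?ltr0n // ler1n.
  by rewrite subr_ge0 h1 lerBlDr lerDl h0.
rewrite /avg_age ler_wpM2l ?divr_ge0 ?ler0n //.
apply: ler_sum => t _.
set e := fun x : R => 1 + \sum_(0 <= j < t) \prod_(s < T)
   (if (j <= s)%N && (s < t)%N then 1 - x * @cfac R Nsub T alpha s else 1).
have Ge : @Good R N p e.
  apply: Good_add => //; first by apply: Good_const => //; exact: ler01.
  apply: Good_sum => // j; apply: Good_prod => // s.
  case: ((j <= s)%N && (s < t)%N); last by apply: Good_const => //; exact: ler01.
  by case: (cf0 s) => c0 c1; apply: Good_lin.
case: Ge => _ _ H.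
have L : 1 / N%:R * \sum_(i < N) expect alpha (@uniform_pmf R N) (@uniform_pmf R Nsub)
     (fun w : outcome N Nsub T => (age_at w i t)%:R) = e (mm R N).
  rewrite (eq_bigr (fun _ => e (mm R N))); last first.
    by move=> i _; rewrite (@expect_age R N Nsub T alpha _ _ Ns0 (usum _ N0) (usum _ Ns0) _ _ (ltnW (ltn_ord t))).
  rewrite sumr_const card_ord -(mulr_natr (e _)) mulrCA.
  by rewrite (@mN R N N0) mulr1.
have Rr : 1 / N%:R * \sum_(i < N) expect alpha p q
     (fun w : outcome N Nsub T => (age_at w i t)%:R) = mm R N * \sum_i e (p i).
  congr (_ * _); apply: eq_bigr => i _.
  by rewrite (@expect_age R N Nsub T alpha _ _ Ns0 ps qs _ _ (ltnW (ltn_ord t))).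
by rewrite L Rr.
Qed.
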